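(* Let $X$ be a locally compact Hausdorff topological space, $Y$ a $T_1$-space whose set of branch points is locally finite, and $p:X\to Y$ an open continuous surjective map. Then $p$ has properties (COMP) and (CONT).
   Context: Two points of $Y$ are $T_2$-disjoint if they have disjoint neighborhoods; $y\in Y$ is a branch point if some $z\neq y$ is not $T_2$-disjoint from $y$. A subset $A\subset Y$ is locally finite if each point of $Y$ has a neighborhood meeting $A$ in finitely many points. Let $\Delta=\{p^{-1}(y):y\in Y\}$ (note $p$, being open continuous surjective, is a factor map). A $\Delta$-map is a continuous $h:X\to X$ mapping each element of $\Delta$ into some element of $\Delta$; $\mathrm{End}(X,\Delta)$ is the monoid of $\Delta$-maps, $\mathrm{End}(Y)=C(Y,Y)$, and $\psi(h)$ is the unique map with $p\circ h=\psi(h)\circ p$. Property (COMP): for every compact $L\subset Y$ there is a compact $K\subset X$ with $p(K)=L$. Property (CONT): $\psi:\mathrm{End}(X,\Delta)\to\mathrm{End}(Y)$ is continuous with respect to compact open topologies (generated by subbasic sets $\{f: f(K)\subset U\}$, $K$ compact, $U$ open). *)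

(* Defs.v *)
From HB Require Import structures.
From mathcomp Require Import all_boot all_order.
From mathcomp Require Import all_classical all_reals all_analysis.
Set Implicit Arguments. Unset Strict Implicit. Unset Printing Implicit Defensive.
Local Open Scope classical_set_scope.

Section Defs.
Context {X Y : topologicalType}.

Definition open_map (p : X -> Y) := forall U : set X, open U -> open (p @` U).

Definition T2_disjoint (y z : Y) :=
  exists U V : set Y, [/\ nbhs y U, nbhs z V & U `&` V = set0].

Definition branch_point (y : Y) := exists z : Y, z <> y /\ ~ T2_disjoint y z.

Definition locally_finite_set (A : set Y) :=
  forall y : Y, exists N : set Y, nbhs y N /\ finite_set (N `&` A).

Definition Delta_map (p : X -> Y) (h : X -> X) :=
  continuous h /\
  forall y : Y, exists y' : Y, h @` (p @^-1` [set y]) `<=` p @^-1` [set y'].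

Definition COMP (p : X -> Y) :=
  forall L : set Y, compact L -> exists K : set X, compact K /\ p @` K = L.
End Defs.

(* Open sets of the compact-open topology on a set M of functions S -> T,
   i.e. of the topology on M generated by the subbasic sets
   {f in M | f(K) ⊆ U}, K compact, U open: W is open iff every h in W
   has a finite intersection of subbasic sets containing h and inside W. *)
Definition co_open {S T : topologicalType} (M : set (S -> T)) (W : set (S -> T)) :=
  W `<=` M /\
  forall h, W h -> exists l : seq (set S * set T),
    (forall KU, KU \in l -> compact KU.1 /\ open KU.2) /\
    (forall KU, KU \in l -> h @` KU.1 `<=` KU.2) /\
    (forall f, M f -> (forall KU, KU \in l -> f @` KU.1 `<=` KU.2) -> W f).

(* Property (CONT): psi : End(X,Delta) -> End(Y) is continuous for the
   compact-open topologies.  psi is given as any function satisfying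
   p \o h = psi h \o p for every Delta-map h (this determines psi h uniquely
   as p is surjective). *)
Definition CONT {X Y : topologicalType} (p : X -> Y) :=
  forall psi : (X -> X) -> (Y -> Y),
    (forall h, Delta_map p h -> p \o h = psi h \o p) ->
    forall W : set (Y -> Y), co_open [set g : Y -> Y | continuous g] W ->
      co_open [set h | Delta_map p h] [set h | Delta_map p h /\ W (psi h)].

(* Main.v *)
Require Import Defs.
From HB Require Import structures.
From mathcomp Require Import all_boot all_order.
From mathcomp Require Import all_classical all_reals all_analysis.
From mathcomp Require Import finmap.
Local Open Scope classical_set_scope.

Section PT.
Variables (Y : topologicalType) (y0 : Y).
Definition pY : Type := Y.
HB.instance Definition _ := Topological.on pY.
HB.instance Definition _ := isPointed.Build pY y0.
Lemma cover_of_compact_aux (L : set Y) : compact L -> @cover_compact Y L.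
Proof. move=> cL. have : @compact pY L := cL. rewrite compact_cover. exact. Qed.
End PT.

Lemma cover_of_compact (Y : topologicalType) (L : set Y) :
  compact L -> cover_compact L.
Proof.
move=> cL; have [[y0 _]|L0] := pselect (exists y, L y).
  exact: (@cover_of_compact_aux Y y0 L cL).
move=> I D f _ _; exists fset0 => // y Ly; exfalso; apply: L0; by exists y.
Qed.

Lemma lc_small_nbhs (X : topologicalType) (x : X) (U : set X) :
  hausdorff_space X -> locally_compact [set: X] -> nbhs x U ->
  exists K, [/\ compact K, nbhs x K & K `<=` U].
Proof.
move=> hX lc Ux.
have [C Cx [cC clC]] := lc x I; rewrite withinET in Cx.
have reg := compact_regular hX cC Cx.
have [A Ax AU] := reg U Ux.
exists (C `&` closure A); split.
- exact: compact_closedI cC (@closed_closure _ A).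
- by apply: filterI => //; apply: filterS Ax; exact: subset_closure.
- by move=> z [_ h]; exact: AU.
Qed.

Lemma quotient_cont (X Y Z : topologicalType) (p : X -> Y) (g : Y -> Z) :
  open_map p -> (forall y, exists x, p x = y) -> continuous (g \o p) -> continuous g.
Proof.
move=> op sp cg; apply/continuousP => A oA.
have -> : g @^-1` A = p @` ((g \o p) @^-1` A).
  apply/seteqP; split=> [y gy|_ [x xA <-]//].
  by have [x px] := sp y; exists x => //=; rewrite /preimage/= px.
by apply: op; move/continuousP: cg; apply.
Qed.

Lemma closure_nonmem_branch (Y : topologicalType) (L : set Y) (w : Y) :
  compact L -> closure L w -> ~ L w -> branch_point w.
Proof.
move=> cL clw nLw.
have PF : ProperFilter (within L (nbhs w)) by apply: within_nbhs_proper.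
have [|z [Lz cz]] := cL (within L (nbhs w)) PF.
  by rewrite /within /=; apply: nearW.
exists z; split; first by move=> zw; apply: nLw; rewrite -zw.
move=> [U [V [Uw Vz UV]]].
have [|t [Ut Vt]] := cz U V _ Vz.
  by rewrite /within /=; apply: filterS Uw => t Ut _.
by have : (U `&` V) t by []; rewrite UV.
Qed.

Lemma compP (X Y : topologicalType) (p : X -> Y) :
  hausdorff_space X -> locally_compact [set: X] -> accessible_space Y ->
  locally_finite_set [set y : Y | branch_point y] ->
  continuous p -> open_map p -> (forall y, exists x, p x = y) -> COMP p.
Proof.
move=> hX lc aY lf cp op sp L cL.
have hV : forall y : Y, exists V : set Y, nbhs y V /\
    (forall z, V z -> branch_point z -> z = y).
  move=> y; have [N [Ny fN]] := lf y.
  pose F := (N `&` [set y0 | branch_point y0]) `\ y.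
  have fF : finite_set F by apply: finite_setD.
  have cF : closed F by apply: (accessible_finite_set_closed.1 aY).
  exists (N `&` ~` F); split.
    apply: filterI => //; apply: open_nbhs_nbhs; split; first by rewrite openC.
    by move=> [_ ]; apply.
  move=> z [Nz nFz] bz; apply: contrapT => zy; apply: nFz; split => //.
have {hV} [V hV] := choice hV.
have hK : forall y : Y, exists K : set X,
    [/\ compact K, nbhs y (p @` K) & K `<=` p @^-1` V y].
  move=> y; have [x pxy] := sp y.
  have Ux : nbhs x (p @^-1` V y) by apply: cp; rewrite pxy; exact: (hV y).1.
  have [K [cK Kx KU]] := @lc_small_nbhs _ _ _ hX lc Ux.
  exists K; split => //.
  apply: (@filterS _ _ _ (p @` K°)).
    by move=> _ [x' /interior_subset Kx' <-]; exists x'.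
  apply: open_nbhs_nbhs; split; first by apply: op; exact: open_interior.
  by exists x.
have {hK} [K hK] := choice hK.
have := @cover_of_compact Y L cL.
move=> /(_ Y L (fun y => (p @` K y)°)).
case.
- by move=> i _; exact: open_interior.
- by move=> y Ly; exists y => //; case: (hK y).
move=> D DL LD.
pose Kb := \bigcup_(i in [set` D]) K i.
have cKb : compact Kb.
  by rewrite /Kb bigcup_fset; apply: bigsetU_compact => i _; case: (hK i).
exists (Kb `&` p @^-1` closure L); split.
  apply: compact_closedI cKb _; apply: preimage_closed; last exact: closed_closure.
  by move=> x _; exact: cp.
apply/seteqP; split.
  move=> _ [x [[i Di Kix] clx] <-].
  apply: contrapT => nL.
  have bp := @closure_nonmem_branch Y L (p x) cL clx nL.
  have [_ _ sub] := hK i.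
  have := (hV i).2 (p x) (sub x Kix) bp => pxi.
  have Li : i \in L by apply: DL.
  by apply: nL; rewrite pxi; move: Li; rewrite in_setE.
move=> z Lz; have [i Di] := LD z Lz.
move=> /interior_subset [x Kix pxz]; exists x => //; split.
  by exists i.
by rewrite /preimage/= pxz; exact: subset_closure.
Qed.

Lemma contP (X Y : topologicalType) (p : X -> Y) :
  COMP p -> continuous p -> open_map p -> (forall y, exists x, p x = y) -> CONT p.
Proof.
move=> hc cp op sp psi hpsi W [WM hW]; split; first by move=> h [].
have : forall L : set Y, exists K : set X, compact L -> compact K /\ p @` K = L.
  move=> L; have [[K hK]|nL] := pselect (exists K : set X, compact K /\ p @` K = L).
    by exists K.
  by exists set0 => cL; exfalso; apply: nL; exact: hc.
move=> /choice[kf hkf].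
have psiE f x : Delta_map p f -> psi f (p x) = p (f x).
  by move=> Df; rewrite -[RHS]/((p \o f) x) (hpsi f Df).
move=> h [Dh Wh].
have [l [l1 [l2 l3]]] := hW _ Wh.
exists [seq (kf KU.1, p @^-1` KU.2) | KU <- l]; split; [|split].
- move=> _ /mapP[KU KUl ->]; have [cK oU] := l1 KU KUl; split => /=.
    by have [] := hkf _ cK.
  by move/continuousP: cp; apply.
- move=> _ /mapP[KU KUl ->] _ [x kx <-] /=.
  have [cK _] := l1 KU KUl; have [_ pK] := hkf _ cK.
  rewrite /preimage/= -psiE //; apply: (l2 KU KUl); exists (p x) => //.
  by rewrite -pK; exists x.
- move=> f Df hf; split => //; apply: l3.
    apply: (@quotient_cont _ _ _ p) => //.
    rewrite -(hpsi f Df) => x; apply: continuous_comp; [exact: Df.1|exact: cp].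
  move=> KU KUl _ [k Kk <-].
  have [cK _] := l1 KU KUl; have [_ pK] := hkf _ cK.
  move: Kk; rewrite -pK => -[x kx <-]; rewrite psiE //.
  have := hf (kf KU.1, p @^-1` KU.2); apply.
    by apply/mapP; exists KU.
  by exists x.
Qed.

Theorem mainTheorem8 (X Y : topologicalType) (p : X -> Y) :
  hausdorff_space X -> locally_compact [set: X] ->
  accessible_space Y ->
  locally_finite_set [set y : Y | branch_point y] ->
  continuous p -> open_map p -> (forall y : Y, exists x : X, p x = y) ->
  COMP p /\ CONT p.
Proof.
move=> hX lc aY lf cp op sp.
have hc : COMP p by exact: compP.
by split => //; exact: contP.
Qed.
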